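(* Consider the control-affine system $\dot\zeta = \hat F(\zeta) + \hat G(\zeta)\upsilon$ with $\zeta\in\mathbb{R}^n$, $\upsilon\in\mathbb{R}^q$, and let $\theta:\mathbb{R}^n\to\mathbb{R}$ be a continuously differentiable bounded function. Fix a constant vector $d\in\mathbb{R}^n$ and constants $r>0$, $\Delta>0$, and define $$\Theta(\zeta) := \exp\!\Big(\frac{\theta(\zeta)}{\|\zeta+d\|+r}-\Delta\Big)-1 .$$ Suppose that (A1) $\theta$ has relative degree $m\ge 2$ with respect to the system, and (A2) $G_d(\zeta):=(\zeta+d)^T\hat G(\zeta)\neq 0$ along the trajectories for all $t\ge t_0$. Then $\Theta$ has relative degree $1$ with respect to the system, and the set $\bar C_\Theta:=\{\zeta\in\mathbb{R}^n:\Theta(\zeta)\ge 0\}$ is forward invariant (for the closed loop under controls satisfying the control barrier condition $L_{\hat F}\Theta(\zeta)+L_{\hat G}\Theta(\zeta)\upsilon+\alpha(\Theta(\zeta))\ge 0$ for some class $\mathcal K$ function $\alpha$).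
   Context: $\hat F:\mathbb{R}^n\to\mathbb{R}^n$ and $\hat G:\mathbb{R}^n\to\mathbb{R}^{n\times q}$ are locally Lipschitz. $L_{\hat F}$, $L_{\hat G}$ denote Lie derivatives along $\hat F$ and $\hat G$. The relative degree of a function $h$ with respect to the system is the minimal number of time differentiations of $h$ along the system dynamics after which the control $\upsilon$ appears explicitly. A set $S$ is forward invariant if every trajectory starting in $S$ at $t_0$ remains in $S$ for all $t\ge t_0$. A class $\mathcal K$ function is a continuous strictly increasing function $\alpha:[0,a)\to[0,\infty)$ with $\alpha(0)=0$. *)

(* Defs.v *)
From HB Require Import structures.
From mathcomp Require Import all_boot all_order all_algebra.
From mathcomp Require Import all_classical all_reals all_analysis.
Set Implicit Arguments. Unset Strict Implicit. Unset Printing Implicit Defensive.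
Import Order.TTheory GRing.Theory Num.Theory.
Import numFieldNormedType.Exports.
Local Open Scope ring_scope.
Local Open Scope classical_set_scope.

Section Defs.
Variables (R : realType) (n q : nat).

Definition enorm (x : 'cV[R]_n) : R := Num.sqrt (\sum_(i < n) (x i 0) ^+ 2).

Definition lieF (F : 'cV[R]_n -> 'cV[R]_n) (h : 'cV[R]_n -> R) : 'cV[R]_n -> R :=
  fun x => 'D_(F x) h x.

Definition lieG (G : 'cV[R]_n -> 'M[R]_(n, q)) (h : 'cV[R]_n -> R)
    (x : 'cV[R]_n) : 'rV[R]_q :=
  \row_(j < q) 'D_(col j (G x)) h x.

Definition lieGu (G : 'cV[R]_n -> 'M[R]_(n, q)) (h : 'cV[R]_n -> R)
    (x : 'cV[R]_n) (v : 'cV[R]_q) : R :=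
  (lieG G h x *m v) 0 0.

Definition rel_degree (F : 'cV[R]_n -> 'cV[R]_n) (G : 'cV[R]_n -> 'M[R]_(n, q))
    (h : 'cV[R]_n -> R) (m : nat) : Prop :=
  (0 < m)%N /\
  (forall k : nat, (k < m.-1)%N -> forall x, lieG G (iter k (lieF F) h) x = 0) /\
  (exists x, lieG G (iter m.-1 (lieF F) h) x != 0).

End Defs.

Definition locally_lipschitz (R : realType) (U V : normedModType R) (f : U -> V) : Prop :=
  forall x : U, exists e : R, 0 < e /\ exists L : R,
    forall y z : U, ball x e y -> ball x e z -> `|f y - f z| <= L * `|y - z|.

Definition C1 (R : realType) (n : nat) (h : 'cV[R]_n -> R) : Prop :=
  (forall x, differentiable h x) /\ (forall v, continuous (fun x => 'D_v h x)).

(* extended class-K function (needed since the barrier condition is imposed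
   also where Theta may be negative) *)
Definition ext_classK (R : realType) (alpha : R -> R) : Prop :=
  continuous alpha /\ (forall x y, x < y -> alpha x < alpha y) /\ alpha 0 = 0.

Definition Theta (R : realType) (n : nat) (theta : 'cV[R]_n -> R) (d : 'cV[R]_n)
    (r Delta : R) (z : 'cV[R]_n) : R :=
  expR (theta z / (enorm (z + d) + r) - Delta) - 1.

(* Main.v *)
Require Import Defs.
From HB Require Import structures.
From mathcomp Require Import all_boot all_order all_algebra.
From mathcomp Require Import all_classical all_reals all_analysis.
Import Order.TTheory GRing.Theory Num.Theory.
Import numFieldNormedType.Exports.
Local Open Scope ring_scope.
Local Open Scope classical_set_scope.

Section H.
Variables (R : realType) (n : nat).

Lemma coord_derive (x w : 'cV[R]_n) i :
  is_derive x w (fun y : 'cV[R]_n => y i 0) (w i 0).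
Proof.
have dM : derivable (@id 'cV[R]_n) x w by [].
apply: DeriveDef; first by move/derivable_mxP : dM; apply.
have := derive_mx dM; rewrite derive_val => /matrixP/(_ i 0).
by rewrite mxE => ->.
Qed.

Lemma is_derive_compR (V : normedModType R) (f : V -> R) (g : R -> R) x w df b :
  differentiable f x -> is_derive x w f df -> is_derive (f x) 1 g b ->
  is_derive x w (g \o f) (b * df).
Proof.
move=> dfx [_ <-] [/derivable1_diffP dg <-].
have dgf : differentiable (g \o f) x by apply: differentiable_comp.
apply: DeriveDef; first exact: diff_derivable.
rewrite deriveE // diff_comp //= diff1E // derive1E deriveE //.
rewrite -deriveE //. by rewrite mulrC (deriveE _ dfx).
Qed.

Lemma chain_traj (h : 'cV[R]_n -> R) (z : R -> 'cV[R]_n) t w :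
  differentiable h (z t) -> is_derive t 1 z w -> is_derive t 1 (h \o z) ('d h (z t) w).
Proof.
move=> dh [dz <-]; have dz' := dz; move/derivable1_diffP in dz'.
have dc : differentiable (h \o z) t by apply: differentiable_comp.
apply: DeriveDef; first exact/derivable1_diffP.
by rewrite deriveE // diff_comp //= (deriveE _ dz').
Qed.

Variable d : 'cV[R]_n.
Definition Sq (y : 'cV[R]_n) : R := \sum_(i < n) ((y + d) i 0) ^+ 2.

Lemma Sq_fun : Sq = \sum_(i < n) (fun y : 'cV[R]_n => y i 0 + d i 0) ^+ 2.
Proof.
rewrite fct_sumE; apply/funext => y; rewrite /Sq; apply: eq_bigr => i _.
by rewrite exprfctE mxE.
Qed.

Lemma Sq_derive x w :
  is_derive x w Sq (\sum_(i < n) (2 * (x + d) i 0 * w i 0)).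
Proof.
rewrite Sq_fun; apply: is_derive_sum => i.
have h1 : is_derive x w (fun y : 'cV[R]_n => y i 0 + d i 0) (w i 0 + 0).
  exact: (is_deriveD (coord_derive x w i) (is_derive_cst _ _ _)).
have h2 := is_deriveX 2 h1.
suff -> : 2 * (x + d) i 0 * w i 0 = (2 * (x i 0 + d i 0) ^+ 2.-1) *: (w i 0 + 0) by [].
by rewrite addr0 mxE expr1.
Qed.

Lemma Sq_diff x : differentiable Sq x.
Proof.
rewrite Sq_fun; apply: differentiable_sum => i.
apply: (differentiableX 1); apply: differentiableD; first exact: differentiable_coord.
exact: differentiable_cst.
Qed.

Lemma inv_derive (V : normedModType R) (f : V -> R) x w df :
  f x != 0 -> is_derive x w f df ->
  is_derive x w (fun y => (f y)^-1) (- (f x)^-2 * df).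
Proof.
move=> fx0 [df' <-]; apply: DeriveDef; first exact: derivableV.
by rewrite deriveV.
Qed.

Definition Nn (y : 'cV[R]_n) : R := Num.sqrt (Sq y).

Lemma Nn_derive x w : 0 < Sq x ->
  is_derive x w Nn ((2 * Num.sqrt (Sq x))^-1 * \sum_(i < n) (2 * (x + d) i 0 * w i 0)).
Proof.
move=> S0; apply: (@is_derive_compR _ Sq Num.sqrt x w _ _ (Sq_diff x) (Sq_derive x w)).
exact: is_derive1_sqrt.
Qed.

Lemma Nn_diff x : 0 < Sq x -> differentiable Nn x.
Proof.
move=> S0; apply: (differentiable_comp (g := Num.sqrt) (Sq_diff x)).
apply/derivable1_diffP; have [] := is_derive1_sqrt S0; done.
Qed.

Lemma Nn_ge0 x : 0 <= Nn x. Proof. exact: sqrtr_ge0. Qed.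

Variables (theta : 'cV[R]_n -> R) (r Delta : R).
Definition aa (y : 'cV[R]_n) : R := theta y * (Nn y + r)^-1 - Delta.

Lemma ThetaE : Theta theta d r Delta = (expR \o aa) - cst 1.
Proof. by []. Qed.

Lemma aa_diff x : differentiable theta x -> 0 < Sq x -> 0 < r -> differentiable aa x.
Proof.
move=> dth S0 r0; apply: differentiableB; last exact: differentiable_cst.
apply: differentiableM => //; apply: differentiableV.
  apply: differentiableD; [exact: Nn_diff|exact: differentiable_cst].
by rewrite gt_eqF // ltr_wpDl // Nn_ge0.
Qed.

Lemma Theta_diff x : differentiable theta x -> 0 < Sq x -> 0 < r ->
  differentiable (Theta theta d r Delta) x.
Proof.
move=> dth S0 r0; rewrite ThetaE; apply: differentiableB; last exact: differentiable_cst.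
apply: differentiable_comp; first exact: aa_diff.
apply/derivable1_diffP; exact: derivable_expR.
Qed.

Lemma Theta_D0 x w : differentiable theta x -> 0 < Sq x -> 0 < r -> theta x != 0 ->
  'D_w theta x = 0 -> 'D_w (Theta theta d r Delta) x = 0 ->
  \sum_(i < n) (x + d) i 0 * w i 0 = 0.
Proof.
move=> dth S0 r0 th0 Dth DT.
have Nr0 : Nn x + r != 0 by rewrite gt_eqF // ltr_wpDl // Nn_ge0.
have hN := Nn_derive x w S0.
have hD : is_derive x w (fun y => Nn y + r) _ := is_deriveD hN (is_derive_cst r x w).
have hI := inv_derive _ (fun y => Nn y + r) x w _ Nr0 hD.
have hth : is_derive x w theta 0.
  by apply: DeriveDef; [exact: diff_derivable|exact: Dth].
have hM := is_deriveM hth hI.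
have hA : is_derive x w aa _ := is_deriveB hM (is_derive_cst Delta x w).
have hE := @is_derive_compR _ aa expR x w _ _ (aa_diff x dth S0 r0) hA (is_derive_expR _).
have hT := is_deriveB hE (is_derive_cst (1:R) x w).
move: DT; rewrite ThetaE (@derive_val _ _ _ _ _ _ _ hT) /=.
rewrite scaler0 !subr0 addr0 -[theta x *: _]/(theta x * _) => /eqP.
rewrite mulf_eq0 (gt_eqF (expR_gt0 _)) /= mulf_eq0 (negbTE th0) /=.
rewrite mulf_eq0 oppr_eq0 invr_eq0 expf_eq0 (negbTE Nr0) andbF /=.
have S0' : 0 < Num.sqrt (Sq x) by rewrite sqrtr_gt0.
rewrite addr0 mulf_eq0 invr_eq0 mulf_eq0 pnatr_eq0 (gt_eqF S0') /=.
have -> : \sum_(i < n) 2 * (x + d) i 0 * w i 0 = 2 * \sum_(i < n) (x + d) i 0 * w i 0.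
  by rewrite mulr_sumr; apply: eq_bigr => i _; rewrite mulrA.
by rewrite mulf_eq0 pnatr_eq0 /= => /eqP.
Qed.

Lemma Sq_pos x : x + d != 0 -> 0 < Sq x.
Proof.
move=> xd; rewrite lt_def sumr_ge0 ?andbT; last by move=> i _; exact: sqr_ge0.
apply: contra xd => /eqP /psumr_eq0P H; apply/eqP/matrixP => i j.
rewrite (ord1 j); have -> : (0 : 'cV[R]_n) i 0 = 0 by rewrite mxE.
apply/eqP; rewrite -sqrf_eq0; apply/eqP; apply: H => //.
by move=> k _; exact: sqr_ge0.
Qed.
End H.

Lemma mulmx_cols (R : realType) (n q : nat) (A : 'M[R]_(n, q)) (u : 'cV[R]_q) :
  A *m u = \sum_(j < q) u j 0 *: col j A.
Proof.
apply/matrixP => i k; rewrite (ord1 k) !mxE summxE; apply: eq_bigr => j _.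
by rewrite !mxE mulrC.
Qed.

Lemma lieGu_d (R : realType) (n q : nat) (G : 'cV[R]_n -> 'M[R]_(n, q)) h x u :
  differentiable h x -> lieGu G h x u = 'd h x (G x *m u).
Proof.
move=> dh; rewrite /lieGu /lieG [G x *m u]mulmx_cols linear_sum !mxE.
apply: eq_bigr => j _; rewrite !mxE linearZ /= deriveE //.
exact: mulrC.
Qed.
From mathcomp Require Import lra.

Lemma near_ex (R : realType) (P : R -> Prop) c : (\forall y \near c, P y) ->
  exists2 e : R, 0 < e & forall y, `|c - y| < e -> P y.
Proof.
move=> /nbhs_ballP [e e0 he]; exists e => // y hy; apply: he.
Qed.

Theorem lemma2 (R : realType) (n q : nat)
  (F : 'cV[R]_n -> 'cV[R]_n) (G : 'cV[R]_n -> 'M[R]_(n, q))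
  (theta : 'cV[R]_n -> R) (d : 'cV[R]_n) (r Delta : R) (m : nat)
  (alpha : R -> R) (t0 : R) (zeta : R -> 'cV[R]_n) (u : R -> 'cV[R]_q) :
  locally_lipschitz F -> locally_lipschitz G ->
  C1 theta -> (exists M : R, forall z, `|theta z| <= M) ->
  0 < r -> 0 < Delta ->
  (* (A1) *)
  (2 <= m)%N -> rel_degree F G theta m ->
  (* closed-loop trajectory on [t0, +oo) *)
  {within `[t0, +oo[, continuous zeta} ->
  (forall t, t0 < t -> is_derive t 1 zeta (F (zeta t) + G (zeta t) *m u t)) ->
  (* (A2) along the trajectory *)
  (forall t, t0 <= t -> (zeta t + d)^T *m G (zeta t) != 0) ->
  (* control barrier condition with a class-K function alpha *)
  ext_classK alpha ->
  (forall t, t0 <= t ->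
     lieF F (Theta theta d r Delta) (zeta t)
     + lieGu G (Theta theta d r Delta) (zeta t) (u t)
     + alpha (Theta theta d r Delta (zeta t)) >= 0) ->
  (* start in the set C_Theta *)
  0 <= Theta theta d r Delta (zeta t0) ->
  rel_degree F G (Theta theta d r Delta) 1 /\
  (forall t, t0 <= t ->
     0 <= Theta theta d r Delta (zeta t) /\
     lieG G (Theta theta d r Delta) (zeta t) != 0).
Proof.
move=> _ _ [dth _] _ r0 D0 m2 [_ [relk _]] czeta dzeta A2 [_ [ainc a0]] barrier T0.
set Th := Theta theta d r Delta.
have LGth x j : 'D_(col j (G x)) theta x = 0.
  have k0 : (0 < m.-1)%N by move: m2; case: (m) => [|[|k]].
  by have := relk 0%N k0 x => /matrixP/(_ 0 j); rewrite !mxE.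
have xd t : t0 <= t -> zeta t + d != 0.
  by move=> /A2; apply: contra => /eqP ->; rewrite trmx0 mul0mx.
have Sp t : t0 <= t -> 0 < Sq R n d (zeta t) by move=> /xd; exact: Sq_pos.
have dT t : t0 <= t -> differentiable Th (zeta t).
  by move=> ht; apply: Theta_diff => //; exact: Sp.
pose f := fun t => Th (zeta t).
pose df := fun t => lieF F Th (zeta t) + lieGu G Th (zeta t) (u t).
have fder t : t0 < t -> is_derive t 1 f (df t).
  move=> ht; have := chain_traj _ _ Th zeta t _ (dT t (ltW ht)) (dzeta t ht).
  rewrite /df /lieF linearD /= lieGu_d; last exact: (dT t (ltW ht)).
  by rewrite (deriveE _ (dT t (ltW ht))).
have fcont : {within `[t0, +oo[, continuous f}.
  apply: (@within_continuous_comp _ _ _ _ zeta Th) => //.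
  move=> y /set_mem [s hs <-]; apply: differentiable_continuous; apply: dT.
  by move: hs; rewrite /= in_itv /= andbT.
have fc t : t0 < t -> {for t, continuous f}.
  by move=> /fder [/derivable1_diffP /differentiable_continuous].
have inv t1 : t0 <= t1 -> 0 <= f t1.
  move=> ht1; rewrite leNgt; apply/negP => ft1.
  have t01 : t0 < t1.
    by rewrite lt_def ht1 andbT; apply/eqP => E; move: ft1; rewrite /f E ltNge T0.
  have sub01 : `[t0, t1] `<=` `[t0, +oo[.
    by move=> s; rewrite /= !in_itv /= => /andP[-> _].
  have [c cI cmin] := EVT_min (ltW t01) (continuous_subspaceW sub01 fcont).
  move: (cI); rewrite in_itv /= => /andP[t0c ct1].
  have t1I : t1 \in `[t0, t1]%R by rewrite in_itv /= ht1 lexx.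
  have fcneg : f c < 0 by apply: le_lt_trans (cmin _ t1I) ft1.
  have t0c' : t0 < c.
    by rewrite lt_def t0c andbT; apply/eqP => E; move: fcneg; rewrite /f E ltNge T0.
  have [e e0 he] := near_ex _ _ _ (cvgr_lt _ (fc c t0c') _ fcneg).
  pose s := Num.max ((t0 + c) / 2) (c - e / 2).
  have hs1 : t0 < s by rewrite lt_max; apply/orP; left; lra.
  have hs2 : s < c by rewrite gt_max; apply/andP; split; lra.
  have hs3 : c - e / 2 <= s by rewrite le_max lexx orbT.
  have h1 : forall y, y \in `]s, c[%R -> is_derive y 1 f (df y).
    move=> y; rewrite in_itv /= => /andP[sy _]; apply: fder; lra.
  have h2 : {within `[s, c], continuous f}.
    apply: continuous_subspaceW fcont => y; rewrite /= !in_itv /= andbT.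
    by move=> /andP[sy _]; lra.
  have [xi xiI hmvt] := MVT hs2 h1 h2.
  move: xiI; rewrite in_itv /= => /andP[sxi xic].
  have sI : s \in `[t0, t1]%R by rewrite in_itv /=; apply/andP; split; lra.
  have fcs := cmin _ sI.
  have fxi : f xi < 0 by apply: he; rewrite ger0_norm; lra.
  have axi : alpha (f xi) < 0 by rewrite -a0; exact: ainc.
  have bxi := barrier xi (ltW (lt_trans hs1 sxi)).
  have dfxi : df xi <= 0.
    have : df xi * (c - s) <= 0 by rewrite -hmvt; lra.
    by rewrite pmulr_lle0 // subr_gt0.
  rewrite /df /f in dfxi fxi axi bxi; lra.
have pos t : t0 <= t -> 0 <= Th (zeta t) /\ lieG G Th (zeta t) != 0.
  move=> ht; split; first exact: inv.
  have fx := inv t ht.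
  have thp : 0 < theta (zeta t).
    move: fx; rewrite /f /Th /Theta subr_ge0 -(expR0 R) ler_expR subr_ge0 => hD.
    have hq : 0 < theta (zeta t) / (enorm (zeta t + d) + r) by apply: lt_le_trans D0 hD.
    have Np : 0 < enorm (zeta t + d) + r by apply: ltr_wpDl (sqrtr_ge0 _) r0.
    by move: hq; rewrite pmulr_lgt0 // invr_gt0.
  apply/negP => /eqP H.
  move: (A2 t ht) => /negP; apply; apply/eqP/matrixP => i j.
  have HD : 'D_(col j (G (zeta t))) Th (zeta t) = 0.
    by move/matrixP: H => /(_ 0 j); rewrite !mxE.
  have := Theta_D0 R n d theta r Delta (zeta t) (col j (G (zeta t))) (dth _) (Sp t ht) r0
    (lt0r_neq0 thp) (LGth _ j) HD.
  rewrite (ord1 i). have -> : (0 : 'M[R]_(1, q)) 0 j = 0 by rewrite mxE.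
  move=> E; rewrite mxE; rewrite -[in RHS]E; apply: eq_bigr => k _.
  by rewrite !mxE.
split; last exact: pos.
split; first by [].
split; first by [].
by exists (zeta t0); exact: (pos t0 (lexx _)).2.
Qed.
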